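(* For any integers $r,t\ge 3$, $dim_s(K_r\times K_t)=\max\{r(t-1),\ t(r-1)\}$.
   Context: $K_n$ is the complete graph on $n$ vertices. The direct product $G\times H$ has vertex set $V(G)\times V(H)$, with $(a,b)$ adjacent to $(c,d)$ iff $ac\in E(G)$ and $bd\in E(H)$. For a connected graph $G$, $I_G[u,v]$ is the set of vertices lying on some shortest $u$–$v$ path; a vertex $w$ strongly resolves $u,v$ if $v\in I_G[u,w]$ or $u\in I_G[v,w]$; a strong resolving set is a set $S\subseteq V(G)$ such that every pair of vertices is strongly resolved by some vertex of $S$; $dim_s(G)$ is the minimum cardinality of a strong resolving set. *)

(* Defs.v *)
From mathcomp Require Import all_boot.
Set Implicit Arguments. Unset Strict Implicit. Unset Printing Implicit Defensive.

Fixpoint ball (T : finType) (e : rel T) (k : nat) (u : T) : {set T} :=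
  match k with
  | 0 => [set u]
  | k'.+1 => ball e k' u :|: [set y | [exists x in ball e k' u, e x y]]
  end.

(* Graph distance: least k with v in ball e k u, searched in 0..#|T|-1
   (correct for connected graphs, which is the standing assumption). *)
Definition gdist (T : finType) (e : rel T) (u v : T) : nat :=
  find (fun k => v \in ball e k u) (iota 0 #|T|).

Definition connected_graph (T : finType) (e : rel T) : Prop :=
  forall u v : T, exists k, v \in ball e k u.

Definition interval (T : finType) (e : rel T) (u v : T) : {set T} :=
  [set w | gdist e u w + gdist e w v == gdist e u v].

Definition strongly_resolves (T : finType) (e : rel T) (w u v : T) : bool :=
  (v \in interval e u w) || (u \in interval e v w).

Definition strong_resolving_set (T : finType) (e : rel T) (S : {set T}) : bool :=
  [forall u, forall v, (u != v) ==> [exists w in S, strongly_resolves e w u v]].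

(* dim_s(G): minimum cardinality of a strong resolving set (V(G) is one). *)
Definition sdim (T : finType) (e : rel T) : nat :=
  \big[minn/#|T|]_(S : {set T} | strong_resolving_set e S) #|S|.

Definition K_adj (n : nat) : rel 'I_n := fun i j => i != j.

Definition direct_prod (A B : finType) (eA : rel A) (eB : rel B) : rel (A * B) :=
  fun x y => eA x.1 y.1 && eB x.2 y.2.

(* Main.v *)
Require Import Defs.
From mathcomp Require Import all_boot zify.
Set Warnings "-notation-overridden".
Set Implicit Arguments. Unset Strict Implicit. Unset Printing Implicit Defensive.

Lemma third n (a b : 'I_n) : 2 < n -> exists c : 'I_n, (c != a) && (c != b).
Proof.
move=> hn; case: (boolP [exists c, (c != a) && (c != b)]) => [/existsP//|/existsPn H].
exfalso.
have : #|'I_n| <= #|[set a; b]|.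
  apply: subset_leq_card; apply/subsetP => c _; rewrite !inE.
  by move: (H c); rewrite negb_and !negbK.
rewrite card_ord cards2; case: (a != b) => /=; lia.
Qed.

Lemma ball2 r t (u v : 'I_r * 'I_t) : 2 < r -> 2 < t ->
  v \in ball (direct_prod (@K_adj r) (@K_adj t)) 2 u.
Proof.
move=> hr ht.
have [a /andP[a1 a2]] := third u.1 v.1 hr.
have [b /andP[b1 b2]] := third u.2 v.2 ht.
rewrite /= !inE; apply/orP; right; apply/existsP; exists (a, b).
rewrite !inE /direct_prod /K_adj /=.
rewrite eq_sym in a1; rewrite eq_sym in b1.
rewrite a2 b2 andbT.
rewrite andbT; apply/orP; right; apply/existsP; exists u.
by rewrite !inE eqxx /= a1 b1.
Qed.

Definition dist r t (u v : 'I_r * 'I_t) : nat :=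
  if u == v then 0 else if (u.1 != v.1) && (u.2 != v.2) then 1 else 2.

Lemma gdistE r t (u v : 'I_r * 'I_t) : 2 < r -> 2 < t ->
  gdist (direct_prod (@K_adj r) (@K_adj t)) u v = dist u v.
Proof.
move=> hr ht; rewrite /gdist card_prod !card_ord.
have -> : r * t = 3 + (r * t - 3) by nia.
rewrite iotaD find_cat.
have -> : has (fun k => v \in ball (direct_prod (@K_adj r) (@K_adj t)) k u) (iota 0 3).
  by rewrite /= (ball2 u v hr ht) !orbT.
have B2 := ball2 u v hr ht; move: B2.
have EX : [exists x in [set u], direct_prod (@K_adj r) (@K_adj t) x v] =
          (u.1 != v.1) && (u.2 != v.2).
  apply/existsP/idP => [[x]|h]; last by exists u; rewrite inE eqxx.
  by rewrite inE => /andP[/eqP -> ].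
rewrite /= !inE /dist (eq_sym u v) EX.
case: (v =P u) => //= _.
by case: ((u.1 != v.1) && (u.2 != v.2)) => //= ->.
Qed.
Lemma dist_le2 r t (u v : 'I_r * 'I_t) : dist u v <= 2.
Proof. by rewrite /dist; case: (u == v) => //; case: (_ && _). Qed.

Lemma dist0 r t (u v : 'I_r * 'I_t) : (dist u v == 0) = (u == v).
Proof. by rewrite /dist; case: (u == v) => //; case: (_ && _). Qed.

Lemma dist_sym r t (u v : 'I_r * 'I_t) : dist u v = dist v u.
Proof. by rewrite /dist eq_sym (eq_sym u.1) (eq_sym u.2). Qed.

Lemma res_far r t (u v w : 'I_r * 'I_t) : 2 < r -> 2 < t -> dist u v = 2 ->
  strongly_resolves (direct_prod (@K_adj r) (@K_adj t)) w u v -> (w = u \/ w = v).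
Proof.
move=> hr ht d2; rewrite /strongly_resolves /interval !inE !gdistE //.
rewrite (dist_sym v u) d2.
have h1 := dist_le2 u w; have h2 := dist_le2 v w.
case/orP => /eqP h.
  right; apply/eqP; rewrite eq_sym -dist0; apply/eqP; lia.
left; apply/eqP; rewrite eq_sym -dist0; apply/eqP; lia.
Qed.
Lemma lower r t (S : {set 'I_r * 'I_t}) : 2 < r -> 2 < t ->
  strong_resolving_set (direct_prod (@K_adj r) (@K_adj t)) S ->
  r * t - minn r t <= #|S|.
Proof.
move=> hr ht /forallP H.
have key : forall u v, u \in ~: S -> v \in ~: S -> u != v -> dist u v = 2 -> False.
  move=> u v hu hv nuv d2.
  have /existsP[w /andP[wS rw]] := implyP (forallP (H u) v) nuv.
  case: (res_far hr ht d2 rw) => ew; subst w.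
    by move: hu; rewrite inE wS.
  by move: hv; rewrite inE wS.
have inj1 : {in ~: S &, injective (fun x : 'I_r * 'I_t => x.1)}.
  move=> u v hu hv /= e1; apply/eqP; apply/negPn/negP => nuv.
  apply: (key u v hu hv nuv).
  by rewrite /dist (negbTE nuv) e1 eqxx.
have inj2 : {in ~: S &, injective (fun x : 'I_r * 'I_t => x.2)}.
  move=> u v hu hv /= e1; apply/eqP; apply/negPn/negP => nuv.
  apply: (key u v hu hv nuv).
  by rewrite /dist (negbTE nuv) e1 eqxx andbF.
have c1 := card_in_imset inj1; have c2 := card_in_imset inj2.
have m1 := max_card [set x.1 | x in ~: S].
have m2 := max_card [set x.2 | x in ~: S].
rewrite c1 card_ord in m1; rewrite c2 card_ord in m2.
have := cardsC S; rewrite card_prod !card_ord.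
lia.
Qed.
Definition S0 r t : {set 'I_r * 'I_t} := [set x | val x.1 != val x.2].

Lemma S0_res r t : 2 < r -> 2 < t ->
  strong_resolving_set (direct_prod (@K_adj r) (@K_adj t)) (S0 r t).
Proof.
move=> hr ht; apply/forallP => u; apply/forallP => v; apply/implyP => nuv.
have refl : forall x y : 'I_r * 'I_t, x \in interval (direct_prod (@K_adj r) (@K_adj t)) y x.
  by move=> x y; rewrite /interval inE !gdistE // /dist eqxx addn0.
case: (boolP (u \in S0 r t)) => hu.
  by apply/existsP; exists u; rewrite hu /strongly_resolves refl orbT.
case: (boolP (v \in S0 r t)) => hv.
  by apply/existsP; exists v; rewrite hv /strongly_resolves refl.
move: hu hv; rewrite !inE !negbK => /eqP hu /eqP hv.
have d1 : u.1 != v.1.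
  apply/negP => /eqP e1; move/negP: nuv; apply; apply/eqP.
  case: u v e1 hu hv => [a b] [c d] /= -> hu hv; congr pair; apply: val_inj; change (nat_of_ord b = nat_of_ord d); by rewrite -hu hv.
have d2 : u.2 != v.2.
  apply/negP => /eqP e1; move/negP: nuv; apply; apply/eqP.
  case: u v d1 e1 hu hv => [a b] [c d] _ /= -> hu hv; congr pair; apply: val_inj; change (nat_of_ord a = nat_of_ord c); by rewrite hu hv.
have [k /andP[k1 k2]] := third u.2 v.2 ht.
apply/existsP; exists (u.1, k).
rewrite inE /= hu (inj_eq val_inj) eq_sym k1 /=.
rewrite /strongly_resolves /interval inE !gdistE // /dist.
case: u v nuv hu hv d1 d2 k1 k2 => [a b] [c d] /= nuv hu hv d1 d2 k1 k2.
rewrite (negbTE nuv) !xpair_eqE /= d1 d2 eqxx /=.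
rewrite (eq_sym c a) (negbTE d1) /= (eq_sym b k) (negbTE k1) (eq_sym d k) k2 /=.
done.
Qed.

Lemma S0_card r t : #|S0 r t| <= r * t - minn r t.
Proof.
pose f (k : 'I_(minn r t)) : 'I_r * 'I_t := (widen_ord (geq_minl r t) k, widen_ord (geq_minr r t) k).
have finj : injective f.
  by move=> a b /(congr1 fst) /(congr1 val) /= ab; apply: val_inj.
have sub : [set f k | k in 'I_(minn r t)] \subset ~: S0 r t.
  by apply/subsetP => x /imsetP[k _ ->]; rewrite !inE negbK.
have := subset_leq_card sub; rewrite (card_imset _ finj) card_ord.
have := cardsC (S0 r t); rewrite card_prod !card_ord.
clear sub finj f.
move=> <- h2; rewrite -addnBA; first exact: leq_addr.
exact: h2.
Qed.

Lemma bigmin_le_seq (I : eqType) (P : pred I) (F : I -> nat) x0 j (s : seq I) :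
  P j -> j \in s -> \big[minn/x0]_(i <- s | P i) F i <= F j.
Proof.
move=> Pj; elim: s => [//|a s IH]; rewrite inE big_cons => /orP[/eqP <-|js].
  by rewrite Pj geq_minl.
case: (P a); last exact: IH.
exact: leq_trans (geq_minr _ _) (IH js).
Qed.

Theorem proposition34 (r t : nat) :
  3 <= r -> 3 <= t ->
  sdim (direct_prod (@K_adj r) (@K_adj t)) = maxn (r * (t - 1)) (t * (r - 1)).
Proof.
move=> hr ht.
have -> : maxn (r * (t - 1)) (t * (r - 1)) = r * t - minn r t.
  rewrite !mulnBr !muln1 (mulnC t r).
  have : r <= r * t by nia.
  have : t <= r * t by nia.
  lia.
apply/eqP; rewrite eqn_leq; apply/andP; split.
  apply: leq_trans (S0_card r t); rewrite /sdim.
  apply: bigmin_le_seq; [exact: S0_res | exact: mem_index_enum].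
rewrite /sdim; apply: (big_ind (fun x => r * t - minn r t <= x)).
- by rewrite card_prod !card_ord leq_subr.
- by move=> x y hx hy; rewrite leq_min hx hy.
- by move=> S hS; apply: lower.
Qed.
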